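(* Let $\alpha,\beta>0$ with $\beta\neq\alpha$, and set $\tau=(\beta-\alpha)^{-1}$. Let $S_0>0$, $I_0\ge 0$, $R_0$ be real numbers with $S_0+I_0+R_0=1$. Then the solution of the system $$\dot S=-\frac{\beta SI}{S+I},\qquad \dot I=\frac{\beta SI}{S+I}-\alpha I,\qquad \dot R=\alpha I$$ with initial conditions $S(0)=S_0$, $I(0)=I_0$, $R(0)=R_0$ is given by $$S(t)=S_0\left(\frac{S_0+I_0}{S_0+I_0e^{t/\tau}}\right)^{\beta\tau},\qquad I(t)=I_0\left(\frac{S_0+I_0}{S_0+I_0e^{t/\tau}}\right)^{\beta\tau}e^{t/\tau},\qquad R(t)=1-\frac{(S_0+I_0)^{\beta\tau}}{(S_0+I_0e^{t/\tau})^{\beta\tau-1}}.$$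
   Context: This is the ''modified SIR'' epidemiological model, in which $S,I,R$ denote the fractions of susceptible, infective and recovered (removed) individuals; the total population $S+I+R$ is conserved and normalized to $1$. *)

(* Defs.v *)
From Stdlib Require Import Reals Lra.
Open Scope R_scope.

Definition sir_is_solution (alpha beta : R) (S I Rr : R -> R) : Prop :=
  forall t : R,
    S t + I t <> 0 /\
    derivable_pt_lim S t (- (beta * S t * I t / (S t + I t))) /\
    derivable_pt_lim I t (beta * S t * I t / (S t + I t) - alpha * I t) /\
    derivable_pt_lim Rr t (alpha * I t).

Definition sir_tau (alpha beta : R) : R := / (beta - alpha).

Definition S_exact (alpha beta S0 I0 : R) (t : R) : R :=
  let tau := sir_tau alpha beta in
  S0 * Rpower ((S0 + I0) / (S0 + I0 * exp (t / tau))) (beta * tau).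

Definition I_exact (alpha beta S0 I0 : R) (t : R) : R :=
  let tau := sir_tau alpha beta in
  I0 * Rpower ((S0 + I0) / (S0 + I0 * exp (t / tau))) (beta * tau)
     * exp (t / tau).

Definition R_exact (alpha beta S0 I0 : R) (t : R) : R :=
  let tau := sir_tau alpha beta in
  1 - Rpower (S0 + I0) (beta * tau)
      / Rpower (S0 + I0 * exp (t / tau)) (beta * tau - 1).

(* Main.v *)
Require Import Defs.
From Stdlib Require Import Reals Lra.
Open Scope R_scope.
Notation dpl := derivable_pt_lim.
Lemma D_conv f x l l' : dpl f x l -> l = l' -> dpl f x l'.
Proof. intros H ->; exact H. Qed.
Lemma D_mul f g x a b : dpl f x a -> dpl g x b -> dpl (fun y => f y * g y) x (a * g x + f x * b).
Proof. intros Hf Hg. apply (derivable_pt_lim_mult f g x a b Hf Hg). Qed.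
Lemma D_plus f g x a b : dpl f x a -> dpl g x b -> dpl (fun y => f y + g y) x (a + b).
Proof. intros Hf Hg. apply (derivable_pt_lim_plus f g x a b Hf Hg). Qed.
Lemma D_minus f g x a b : dpl f x a -> dpl g x b -> dpl (fun y => f y - g y) x (a - b).
Proof. intros Hf Hg. apply (derivable_pt_lim_minus f g x a b Hf Hg). Qed.
Lemma D_div f g x a b : dpl f x a -> dpl g x b -> g x <> 0 -> dpl (fun y => f y / g y) x ((a * g x - b * f x) / (g x)²).
Proof. intros Hf Hg Hn. apply (derivable_pt_lim_div f g x a b Hf Hg Hn). Qed.
Lemma D_const c x : dpl (fun _ => c) x 0.
Proof. apply (derivable_pt_lim_const c x). Qed.
Lemma D_id x : dpl (fun y => y) x 1.
Proof. apply (derivable_pt_lim_id x). Qed.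
Lemma D_exp f x a : dpl f x a -> dpl (fun y => exp (f y)) x (exp (f x) * a).
Proof. intros Hf. apply (derivable_pt_lim_comp f exp x a (exp (f x)) Hf (derivable_pt_lim_exp (f x))). Qed.
Lemma D_ln f x a : dpl f x a -> 0 < f x -> dpl (fun y => ln (f y)) x (/ f x * a).
Proof. intros Hf Hp. apply (derivable_pt_lim_comp f ln x a (/ f x) Hf (derivable_pt_lim_ln (f x) Hp)). Qed.
Lemma const_of_D f x y : (forall t, dpl f t 0) -> f x = f y.
Proof. intros H. destruct (MVT_abs f (fun _ => 0) y x) as [c [Hc _]]. intros; apply H.
rewrite Rabs_R0, Rmult_0_l in Hc. destruct (Rcase_abs (f x - f y)); [rewrite Rabs_left in Hc|rewrite Rabs_right in Hc]; lra. Qed.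

Theorem mainTheorem1 (alpha beta S0 I0 R0 : R)
  (halpha : 0 < alpha) (hbeta : 0 < beta) (hne : beta <> alpha)
  (hS0 : 0 < S0) (hI0 : 0 <= I0) (hsum : S0 + I0 + R0 = 1) :
  (sir_is_solution alpha beta (S_exact alpha beta S0 I0)
       (I_exact alpha beta S0 I0) (R_exact alpha beta S0 I0) /\
   S_exact alpha beta S0 I0 0 = S0 /\
   I_exact alpha beta S0 I0 0 = I0 /\
   R_exact alpha beta S0 I0 0 = R0) /\
  (forall S I Rr : R -> R,
     sir_is_solution alpha beta S I Rr ->
     S 0 = S0 -> I 0 = I0 -> Rr 0 = R0 ->
     forall t : R,
       S t = S_exact alpha beta S0 I0 t /\
       I t = I_exact alpha beta S0 I0 t /\
       Rr t = R_exact alpha beta S0 I0 t).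
Proof.
pose (k := beta - alpha).
assert (hk : k <> 0) by (unfold k; intro; apply hne; lra).
pose (c := S0 + I0).
assert (hc : 0 < c) by (unfold c; lra).
pose (E := fun t => exp (t * k)).
pose (u := fun t => S0 + I0 * E t).
assert (hE : forall t, 0 < E t) by (intro; apply exp_pos).
assert (hu : forall t, 0 < u t).
{ intro t; unfold u; specialize (hE t); nra. }
pose (g := beta / k).
pose (V := fun t => exp (g * (ln c - ln (u t)))).
assert (hV : forall t, 0 < V t) by (intro; apply exp_pos).
assert (htau : forall t, t / sir_tau alpha beta = t * k).
{ intro t; unfold sir_tau, k, Rdiv; rewrite Rinv_inv; ring. }
assert (eS : forall t, S_exact alpha beta S0 I0 t = S0 * V t).
{ intro t; unfold S_exact, Rpower; rewrite htau.
  change (S0 + I0 * exp (t * k)) with (u t). fold c. unfold Rdiv at 1.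
  rewrite ln_mult, ln_Rinv. unfold V, g, sir_tau. fold k. f_equal; f_equal; unfold Rdiv; ring.
  apply (hu t). lra. apply Rinv_0_lt_compat, (hu t). }
assert (eI : forall t, I_exact alpha beta S0 I0 t = I0 * V t * E t).
{ intro t; unfold I_exact, Rpower; rewrite htau.
  change (S0 + I0 * exp (t * k)) with (u t). fold c. unfold Rdiv at 1.
  rewrite ln_mult, ln_Rinv. unfold V, g, sir_tau. fold k. f_equal; f_equal; f_equal; unfold Rdiv; ring.
  apply (hu t). lra. apply Rinv_0_lt_compat, (hu t). }
assert (eR : forall t, R_exact alpha beta S0 I0 t = 1 - V t * u t).
{ intro t; unfold R_exact, Rpower; rewrite htau. fold k. fold c.
  change (S0 + I0 * exp (t * k)) with (u t).
  replace (beta * sir_tau alpha beta) with g by (unfold g, sir_tau, k; unfold Rdiv; ring).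
  f_equal.
  assert (exp (g * ln c) = V t * u t * exp ((g - 1) * ln (u t))).
  { transitivity (exp (g*(ln c - ln(u t)) + ln (u t) + (g-1)*ln(u t))).
    f_equal; ring. rewrite !exp_plus, exp_ln by apply hu. reflexivity. }
  rewrite H. field. apply Rgt_not_eq, exp_pos. }
assert (dE : forall t, dpl E t (k * E t)).
{ intro t. eapply D_conv. apply D_exp, D_mul; [apply D_id | apply D_const].
  unfold E; ring. }
assert (du : forall t, dpl u t (I0 * k * E t)).
{ intro t. eapply D_conv. apply D_plus; [apply D_const | apply D_mul; [apply D_const | apply dE]].
  cbv beta; ring. }
assert (dV : forall t, dpl V t (- beta * V t * I0 * E t / u t)).
{ intro t. eapply D_conv. apply D_exp, D_mul; [apply D_const | apply D_minus; [apply D_const | apply D_ln; [apply du | apply hu]]].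
  cbv beta. fold (V t). unfold g. field. split; [apply Rgt_not_eq, hu | exact hk]. }
assert (dVu : forall t, dpl (fun y => V y * u y) t (- alpha * (I0 * V t * E t))).
{ intro t. eapply D_conv. apply D_mul; [apply dV | apply du].
  cbv beta. unfold k. field. apply Rgt_not_eq, hu. }
assert (hSI : forall t, S0 * V t + I0 * V t * E t = V t * u t).
{ intro; unfold u; ring. }
assert (E0 : E 0 = 1) by (unfold E; rewrite Rmult_0_l; apply exp_0).
assert (u0 : u 0 = c) by (unfold u, c; rewrite E0; ring).
assert (V0 : V 0 = 1) by (unfold V; rewrite u0, Rminus_diag, Rmult_0_r; apply exp_0).
assert (hk' : beta = k + alpha) by (unfold k; ring).
split.
- split; [|split; [|split]].
  + intro t. split; [|split; [|split]].
    * rewrite eS, eI, hSI. apply Rgt_not_eq, Rmult_lt_0_compat; auto.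
    * apply derivable_pt_lim_ext with (fun y => S0 * V y); [intro; symmetry; apply eS|].
      eapply D_conv. apply D_mul; [apply D_const | apply dV].
      rewrite eS, eI, hSI. field. split; apply Rgt_not_eq; [apply hu | apply hV].
    * apply derivable_pt_lim_ext with (fun y => I0 * V y * E y); [intro; symmetry; apply eI|].
      eapply D_conv. apply D_mul; [apply D_mul; [apply D_const | apply dV] | apply dE].
      rewrite eS, eI, hSI. unfold u. rewrite hk'. field. repeat split; apply Rgt_not_eq; first [apply (hu t) | apply hV | apply hE].
    * apply derivable_pt_lim_ext with (fun y => 1 - V y * u y); [intro; symmetry; apply eR|].
      eapply D_conv. apply D_minus; [apply D_const | apply dVu].
      rewrite eI. ring.
  + rewrite eS, V0; ring.
  + rewrite eI, V0, E0; ring.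
  + rewrite eR, V0, u0. unfold c; lra.
- intros S I Rr Hsol HS0 HI0 HR0 t.
  pose (N := fun y => S y + I y).
  assert (hN : forall y, N y <> 0) by (intro y; apply (Hsol y)).
  assert (hNN : forall y, 0 < N y * N y).
  { intro y; specialize (hN y); destruct (Rlt_or_le 0 (N y)); [nra|].
    assert (N y < 0) by (destruct H; [exact H| contradiction]). nra. }
  assert (dS : forall y, dpl S y (- (beta * S y * I y / N y))) by (intro y; apply (Hsol y)).
  assert (dI : forall y, dpl I y (beta * S y * I y / N y - alpha * I y)) by (intro y; apply (Hsol y)).
  assert (dR : forall y, dpl Rr y (alpha * I y)) by (intro y; apply (Hsol y)).
  assert (dN : forall y, dpl N y (- alpha * I y)).
  { intro y. eapply D_conv. apply D_plus; [apply dS | apply dI]. ring. }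
  pose (G := fun y => (S y * u y / N y - S0) * exp (0 - k * (y + ln (N y * N y) / (2*alpha)))).
  assert (dG : forall y, dpl G y 0).
  { intro y. eapply D_conv.
    apply D_mul; [apply D_minus; [apply D_div; [apply D_mul; [apply dS | apply du] | apply dN | apply hN] | apply D_const] |].
    apply D_exp, D_minus; [apply D_const|]. apply D_mul; [apply D_const|].
    apply D_plus; [apply D_id|]. apply D_div; [|apply D_const|].
    apply D_ln; [apply D_mul; apply dN | apply hNN].
    lra.
    cbv beta. unfold N, u, k, Rsqr. field. split; [|lra].
    specialize (hN y); unfold N in hN; exact hN. }
  assert (hh : forall t, S t * u t / N t - S0 = 0).
  { intro t0. assert (hG : G t0 = G 0) by (apply const_of_D; exact dG). unfold G in hG. rewrite HS0, u0 in hG. 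
    replace (S0 * c / N 0 - S0) with 0 in hG by (unfold N; rewrite HS0, HI0; fold c; field; lra).
    rewrite Rmult_0_l in hG. apply Rmult_integral in hG. destruct hG as [hG|hG]; [exact hG|].
    exfalso; apply (Rgt_not_eq _ _ (exp_pos _) hG). }
  assert (hSt : forall y, S y * u y / N y - S0 = 0 -> S y = S0 * N y / u y).
  { intros y Hy. assert (S y = (S y * u y / N y) * N y / u y) by (field; split; [apply hN | apply Rgt_not_eq, hu]).
    rewrite H. replace (S y * u y / N y) with S0 by lra. reflexivity. }
  assert (hS : forall y, S y = S0 * N y / u y) by (intro y; apply hSt, hh).
  assert (hI : forall y, I y = N y * I0 * E y / u y).
  { intro y. replace (I y) with (N y - S y) by (unfold N; ring). rewrite hS.
    unfold u. field. apply Rgt_not_eq, (hu y). }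
  pose (W := fun y => N y / (V y * u y)).
  assert (dW : forall y, dpl W y 0).
  { intro y. eapply D_conv. apply D_div; [apply dN | apply dVu |].
    apply Rgt_not_eq, Rmult_lt_0_compat; [apply hV | apply hu].
    rewrite hI. unfold Rsqr. field. split; apply Rgt_not_eq; [apply hu | apply hV]. }
  assert (hNt : forall y, N y = V y * u y).
  { intro y. assert (W y = W 0) by (apply const_of_D; exact dW).
    unfold W in H. rewrite V0, u0 in H. unfold N in H at 2. rewrite HS0, HI0 in H. fold c in H.
    replace (c / (1 * c)) with 1 in H by (field; lra).
    assert (N y = N y / (V y * u y) * (V y * u y)) by (field; split; apply Rgt_not_eq; [apply hu | apply hV]).
    rewrite H0, H; ring. }
  pose (Z := fun y => Rr y + N y).
  assert (dZ : forall y, dpl Z y 0).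
  { intro y. eapply D_conv. apply D_plus; [apply dR | apply dN]. ring. }
  assert (hZ : Z t = Z 0) by (apply const_of_D; exact dZ).
  unfold Z in hZ. rewrite HR0 in hZ. unfold N in hZ at 2. rewrite HS0, HI0 in hZ.
  split; [|split].
  + rewrite eS, hS, hNt. field. apply Rgt_not_eq, hu.
  + rewrite eI. replace (I t) with (N t - S t) by (unfold N; ring).
    rewrite hS, hNt. unfold u. field. apply Rgt_not_eq, (hu t).
  + rewrite eR, <- hNt. lra.
Qed.
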